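(* Let $X=(X_1,\dots,X_d)$ be a random vector with values in $\{0,1\}^d$ such that $\mathbb{P}(X=x)>0$ for every $x\in\{0,1\}^d$, let $G:\{0,1\}^d\to\mathbb{R}$, and let $\Gamma=(\Gamma_{A,B})_{A,B\subseteq D}$ with $\Gamma_{A,B}:=\mathbb{E}[e_A(X_A)e_B(X_B)]$ (an invertible matrix). For $A\subseteq D$ define $e^\star_A(X):=\sum_{B\subseteq D}(\Gamma^{-1})_{A,B}\,e_B(X_B)$. Then for all $A,B\subseteq D$, $\langle e_B(X_B),e^\star_A(X)\rangle=\mathbf{1}_{\{A=B\}}$, and $$G(X)=\sum_{A\subseteq D}\langle G(X),e^\star_A(X)\rangle\, e_A(X_A)\quad\text{a.s.}$$
   Context: $D=\{1,\dots,d\}$; for $A\subseteq D$, $X_A:=(X_i)_{i\in A}$, $\mathbf{P}_A(x_A):=\mathbb{P}(X_A=x_A)$, and $e_A(X_A):=\dfrac{(-1)^{\sum_{j\in A}X_j}}{\mathbf{P}_A(X_A)}$ with $e_\emptyset(X_\emptyset)=1$. The inner product is $\langle U,V\rangle:=\mathbb{E}[UV]$ for real random variables $U,V$ that are functions of $X$. *)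

(* Defs.v *)
From mathcomp Require Import all_boot all_order all_algebra.
Set Implicit Arguments. Unset Strict Implicit. Unset Printing Implicit Defensive.
Import Order.TTheory GRing.Theory Num.Theory.
Local Open Scope ring_scope.

Section Defs.
Variables (R : realFieldType) (d : nat).

(* outcomes x in {0,1}^d, coordinates indexed by 'I_d (D = {1..d} shifted) *)
Definition outcome := {ffun 'I_d -> bool}.

Variable p : outcome -> R.  (* p x = P(X = x) *)

Definition expect (U : outcome -> R) : R := \sum_x p x * U x.

Definition inner (U V : outcome -> R) : R := expect (fun x => U x * V x).

Definition marg (A : {set 'I_d}) (x : outcome) : R :=
  \sum_(y : outcome | [forall j in A, y j == x j]) p y.

Definition ebasis (A : {set 'I_d}) (x : outcome) : R :=
  (-1) ^+ (\sum_(j in A) nat_of_bool (x j))%N / marg A x.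

Definition nsets := #|{: {set 'I_d}}|.

Definition Gamma : 'M[R]_nsets :=
  \matrix_(i, j) inner (ebasis (enum_val i)) (ebasis (enum_val j)).

Definition estar (A : {set 'I_d}) (x : outcome) : R :=
  \sum_(B : {set 'I_d}) invmx Gamma (enum_rank A) (enum_rank B) * ebasis B x.

End Defs.

(* Main.v *)
Require Import Defs.
From mathcomp Require Import all_boot all_order all_algebra.
From mathcomp Require Import lra zify.
Import Order.TTheory GRing.Theory Num.Theory.
Local Open Scope ring_scope.

Section S.
Variables (R : realFieldType) (d : nat) (p : outcome d -> R).
Hypothesis p_pos : forall x, 0 < p x.

Definition sgn (A : {set 'I_d}) (x : outcome d) : R :=
  (-1) ^+ (\sum_(j in A) nat_of_bool (x j))%N.

Definition flip (j : 'I_d) (x : outcome d) : outcome d :=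
  [ffun i => if i == j then ~~ x i else x i].

Lemma flipK j : involutive (flip j).
Proof.
move=> x; apply/ffunP => i; rewrite !ffunE.
by case: (i == j) => //; rewrite negbK.
Qed.

Lemma marg_gt0 (A : {set 'I_d}) (x : outcome d) : 0 < marg p A x.
Proof.
rewrite /marg (bigD1 x) /=; last by apply/forallP => i; rewrite eqxx implybT.
have : 0 <= \sum_(i : outcome d | [forall j in A, i j == x j] && (i != x)) p i.
  by apply: sumr_ge0 => i _; apply: ltW.
have := p_pos x; lra.
Qed.

Lemma sgn_flip (A : {set 'I_d}) (j : 'I_d) (x : outcome d) : j \in A -> sgn A (flip j x) = - sgn A x.
Proof.
move=> jA; rewrite /sgn (bigD1 j) //= [in RHS](bigD1 j) //= !exprD.
rewrite (eq_bigr (fun i => nat_of_bool (x i))); last first.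
  by move=> i /andP [_ ij]; rewrite ffunE (negbTE ij).
rewrite ffunE eqxx; case: (x j) => /=; rewrite ?expr1 ?expr0; lra.
Qed.

Lemma ebasis_flip (B : {set 'I_d}) (j : 'I_d) (x : outcome d) : j \notin B -> ebasis p B (flip j x) = ebasis p B x.
Proof.
move=> jB; rewrite /ebasis.
rewrite (eq_bigr (fun i => nat_of_bool (x i))); last first.
  move=> i iB; rewrite ffunE.
  suff -> : (i == j) = false by [].
  by apply/negbTE; apply: contraNneq jB => <-.
congr (_ / _); rewrite /marg; apply: eq_bigl => y.
apply: eq_forallb => i; case iB: (i \in B) => //=.
rewrite ffunE.
suff -> : (i == j) = false by [].
by apply/negbTE; apply: contraNneq jB => <-.
Qed.

Lemma L_zero {A B : {set 'I_d}} {j : 'I_d} : j \in A -> j \notin B ->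
  \sum_x sgn A x * ebasis p B x = 0.
Proof.
move=> jA jB.
set S := \sum_x _.
have : S = - S.
  rewrite {1}/S (reindex_inj (can_inj (flipK j))) /= /S -sumrN.
  by apply: eq_bigr => x _; rewrite sgn_flip // ebasis_flip // mulNr.
lra.
Qed.

Lemma L_self (A : {set 'I_d}) : 0 < \sum_x sgn A x * ebasis p A x.
Proof.
have h x : sgn A x * ebasis p A x = (marg p A x)^-1.
  rewrite /ebasis -/(sgn A x) mulrA /sgn -exprD addnn -signr_odd odd_double.
  by rewrite expr0 mul1r.
rewrite (eq_bigr _ (fun x _ => h x)) (bigD1 [ffun => false]) //=.
have : 0 <= \sum_(i | i != [ffun => false]) (marg p A i)^-1.
  by apply: sumr_ge0 => i _; rewrite invr_ge0 ltW // marg_gt0.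
have : 0 < (marg p A [ffun => false])^-1 by rewrite invr_gt0 marg_gt0.
lra.
Qed.

Lemma indep (c : {set 'I_d} -> R) :
  (forall x, \sum_B c B * ebasis p B x = 0) -> forall B, c B = 0.
Proof.
move=> H.
suff: forall k (B : {set 'I_d}), (d - #|B| < k)%N -> c B = 0.
  by move=> K B; apply: (K (d - #|B|).+1).
elim=> [//|k IH] B hB.
have : \sum_x sgn B x * (\sum_C c C * ebasis p C x) = 0.
  by rewrite big1 // => x _; rewrite H mulr0.
rewrite (eq_bigr (fun x => \sum_C sgn B x * (c C * ebasis p C x)));
  last by move=> x _; rewrite mulr_sumr.
rewrite exchange_big /= (bigD1 B) //= [X in _ + X]big1; last first.
  move=> C CB.
  case sBC: (B \subset C).
    have pr : B \proper C by rewrite properEneq eq_sym CB sBC.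
    have h2 := proper_card pr; have h1 : (#|C| <= d)%N by rewrite -[X in (_ <= X)%N]card_ord max_card.
    rewrite IH; first by rewrite big1 // => x _; rewrite mul0r mulr0.
    lia.
  have [j jB jC] := subsetPn (negbT sBC).
  rewrite (eq_bigr (fun x => c C * (sgn B x * ebasis p C x))); last first.
    by move=> x _; rewrite mulrCA.
  by rewrite -mulr_sumr (L_zero jB jC) mulr0.
rewrite addr0.
rewrite (eq_bigr (fun x => c B * (sgn B x * ebasis p B x))); last first.
  by move=> x _; rewrite mulrCA.
rewrite -mulr_sumr => /eqP; rewrite mulf_eq0 => /orP [/eqP //|].
by rewrite gt_eqF // L_self.
Qed.

Lemma sum_enum (F : {set 'I_d} -> R) :
  \sum_(i < nsets d) F (enum_val i) = \sum_A F A.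
Proof.
by rewrite [RHS](reindex (@enum_val _ {: {set 'I_d}})) //; apply: onW_bij; apply: enum_val_bij.
Qed.

Lemma sum_enumo (F : outcome d -> R) :
  \sum_(i < #|{: outcome d}|) F (enum_val i) = \sum_x F x.
Proof.
by rewrite [RHS](reindex (@enum_val _ {: outcome d})) //; apply: onW_bij; apply: enum_val_bij.
Qed.

Lemma inner_sumL (c : {set 'I_d} -> R) (f : {set 'I_d} -> outcome d -> R) h :
  inner p (fun x => \sum_A c A * f A x) h = \sum_A c A * inner p (f A) h.
Proof.
rewrite /inner /expect.
rewrite (eq_bigr (fun x => \sum_A p x * (c A * f A x * h x))); last first.
  by move=> x _; rewrite mulr_suml mulr_sumr.
rewrite exchange_big /=; apply: eq_bigr => A _; rewrite mulr_sumr.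
by apply: eq_bigr => x _; rewrite !mulrA [p x * c A]mulrC.
Qed.

Lemma inner_sym f g : inner p f g = inner p g f.
Proof. by apply: eq_bigr => x _; rewrite [f x * _]mulrC. Qed.

Lemma inner_ext f g h : (forall x, f x = g x) -> inner p f h = inner p g h.
Proof. by move=> e; apply: eq_bigr => x _; rewrite e. Qed.

Lemma Gamma_E A B : Gamma p (enum_rank A) (enum_rank B) = inner p (ebasis p A) (ebasis p B).
Proof. by rewrite mxE !enum_rankK. Qed.

Lemma Gamma_unit : Gamma p \in unitmx.
Proof.
rewrite -row_free_unit -kermx_eq0; apply/eqP/row_matrixP => i; rewrite row0.
set v := row i _.
have hv : v *m Gamma p = 0 by rewrite /v -row_mul mulmx_ker row0.
pose c A := v 0 (enum_rank A).
pose f x := \sum_A c A * ebasis p A x.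
have hB B : inner p (ebasis p B) f = 0.
  rewrite inner_sym inner_sumL.
  have := congr1 (fun M : 'rV[R]_(nsets d) => M 0 (enum_rank B)) hv; rewrite !mxE => e; rewrite -[in RHS]e.
  rewrite -sum_enum; apply: eq_bigr => j _.
  by rewrite /c enum_valK /Gamma !mxE enum_rankK.
have hff : inner p f f = 0.
  by rewrite {1}/f inner_sumL big1 // => B _; rewrite hB mulr0.
have f0 x : f x = 0.
  have hge : forall y, true -> 0 <= p y * (f y * f y).
    by move=> y _; apply: mulr_ge0; [exact: ltW | rewrite -expr2; exact: sqr_ge0].
  move: hff; rewrite /inner /expect => hff.
  have := psumr_eq0P hge hff (i:=x) isT => /eqP.
  by rewrite !mulf_eq0 (gt_eqF (p_pos x)) orbb /= => /eqP.
have := indep c f0 => c0; apply/rowP => j; rewrite !mxE.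
by have := c0 (enum_val j); rewrite /c /v enum_valK !mxE.
Qed.

Lemma dual A B : inner p (ebasis p B) (estar p A) = (A == B)%:R.
Proof.
rewrite inner_sym (inner_ext (estar p A) (fun x => \sum_C invmx (Gamma p) (enum_rank A) (enum_rank C) * ebasis p C x) _ (fun _ => erefl)).
rewrite inner_sumL.
have := congr1 (fun M : 'M[R]_(nsets d) => M (enum_rank A) (enum_rank B)) (mulVmx Gamma_unit).
rewrite !mxE (inj_eq enum_rank_inj) => <-.
rewrite -sum_enum; apply: eq_bigr => j _.
by rewrite enum_valK /Gamma mxE enum_rankK.
Qed.

Lemma card_eq : #|{: outcome d}| = nsets d.
Proof.
apply: (@bij_eq_card _ _ (fun x : outcome d => [set i | x i])).
exists (fun A : {set 'I_d} => [ffun i => i \in A] : outcome d).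
  by move=> x; apply/ffunP => i; rewrite ffunE inE.
by move=> A; apply/setP => i; rewrite inE ffunE.
Qed.

Lemma span (G : outcome d -> R) : exists c : {set 'I_d} -> R,
  forall x, G x = \sum_A c A * ebasis p A x.
Proof.
pose E : 'M[R]_(nsets d, #|{: outcome d}|) :=
  \matrix_(i, k) ebasis p (enum_val i) (enum_val k).
have fE : row_free E.
  rewrite -kermx_eq0; apply/eqP/row_matrixP => i; rewrite row0.
  set v := row i _.
  have hv : v *m E = 0 by rewrite /v -row_mul mulmx_ker row0.
  pose c A := v 0 (enum_rank A).
  have h0 x : \sum_A c A * ebasis p A x = 0.
    have := congr1 (fun M : 'rV[R]_(#|{: outcome d}|) => M 0 (enum_rank x)) hv; rewrite !mxE => e; rewrite -[in RHS]e.
    rewrite -sum_enum; apply: eq_bigr => j _.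
    by rewrite /c enum_valK /E !mxE enum_rankK.
  have := indep c h0 => c0; apply/rowP => j; rewrite !mxE.
  by have := c0 (enum_val j); rewrite /c /v enum_valK !mxE.
have fullE : row_full E.
  rewrite -col_leq_rank; apply: (@leq_trans (nsets d)); last by rewrite row_leq_rank.
  by rewrite card_eq.
have := submx_full (\row_k G (enum_val k)) fullE => /submxP [D hD].
exists (fun A => D 0 (enum_rank A)) => x.
have := congr1 (fun M : 'rV[R]_(#|{: outcome d}|) => M 0 (enum_rank x)) hD; rewrite !mxE enum_rankK => ->.
rewrite -sum_enum; apply: eq_bigr => j _.
by rewrite enum_valK /E !mxE enum_rankK.
Qed.

End S.

Theorem corollary3 (R : realFieldType) (d : nat) (p : outcome d -> R)
  (p_pos : forall x, 0 < p x) (p_sum : \sum_x p x = 1)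
  (G : outcome d -> R) :
  Gamma p \in unitmx /\
  (forall A B : {set 'I_d},
      inner p (ebasis p B) (estar p A) = (A == B)%:R) /\
  (forall x, 0 < p x ->
      G x = \sum_(A : {set 'I_d}) inner p G (estar p A) * ebasis p A x).
Proof.
split; first exact: (@Gamma_unit R d p p_pos).
split; first by move=> A B; apply: (@dual R d p p_pos).
have [c hc] := @span R d p p_pos G.
have hA A : inner p G (estar p A) = c A.
  rewrite (@inner_ext R d p G (fun x => \sum_C c C * ebasis p C x) _ hc).
  rewrite (@inner_sumL R d p) (bigD1 A) //= big1 ?addr0; last first.
    by move=> C CA; rewrite (@dual R d p p_pos) eq_sym (negbTE CA) mulr0.
  by rewrite (@dual R d p p_pos) eqxx mulr1.
by move=> x _; rewrite hc; apply: eq_bigr => A _; rewrite hA.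
Qed.
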